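(* Let $p\in\{1,2\}$. For all $u\in\mathcal C^\infty_c(\mathbb R^2)$, $$\int_{\mathbb R^2}|x|^{2p}|\nabla^2u|^2\lesssim\int_{\mathbb R^2}|x|^{2p}|\Delta u|^2+\int_{\mathbb R^2}|x|^{2p-2}|\nabla u|^2.$$
   Context: $\nabla^2u$ denotes the Hessian of $u$, $|\nabla^2u|^2=\sum_{i,j}(\partial_{ij}u)^2$. *)

(* Defs.v *)
From Stdlib Require Import Reals Lra ClassicalEpsilon.
Open Scope R_scope.

Definition continuous2 (f : R -> R -> R) : Prop :=
  forall x y eps, 0 < eps -> exists delta, 0 < delta /\
    forall x' y', (x' - x)^2 + (y' - y)^2 < delta^2 ->
      Rabs (f x' y' - f x y) < eps.

(** C^infinity on R^2: continuous, and both first partial derivatives exist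
    everywhere and are themselves C^infinity (coinductively: all iterated
    partial derivatives exist and are continuous). *)
CoInductive Cinf2 (f : R -> R -> R) : Prop :=
  Cinf2_intro :
    continuous2 f ->
    (exists fx, (forall x y, derivable_pt_lim (fun t => f t y) x (fx x y)) /\ Cinf2 fx) ->
    (exists fy, (forall x y, derivable_pt_lim (fun t => f x t) y (fy x y)) /\ Cinf2 fy) ->
    Cinf2 f.

Definition supported_in_box (u : R -> R -> R) (R0 : R) : Prop :=
  forall x y, R0 < Rabs x \/ R0 < Rabs y -> u x y = 0.

Definition compact_support (u : R -> R -> R) : Prop :=
  exists R0, 0 < R0 /\ supported_in_box u R0.

(** Total Riemann integral: RiemannInt when f is Riemann integrable on [a,b]
    (the value does not depend on the integrability proof), 0 otherwise. *)
Definition Rint (f : R -> R) (a b : R) : R :=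
  match excluded_middle_informative (exists _ : Riemann_integrable f a b, True) with
  | left H => RiemannInt (proj1_sig (constructive_indefinite_description _ H))
  | right _ => 0
  end.

Definition Int_box (f : R -> R -> R) (R0 : R) : R :=
  Rint (fun x => Rint (fun y => f x y) (- R0) R0) (- R0) R0.

(* Main.v *)
Require Import Defs.
From Stdlib Require Import Reals Lra Lia FunctionalExtensionality ClassicalEpsilon.
From Coquelicot Require Import Coquelicot.
Open Scope R_scope.

Lemma dmul f g x a b : derivable_pt_lim f x a -> derivable_pt_lim g x b ->
  derivable_pt_lim (fun t => f t * g t) x (a * g x + f x * b).
Proof. intros; apply (derivable_pt_lim_mult f g); auto. Qed.
Lemma dplus f g x a b : derivable_pt_lim f x a -> derivable_pt_lim g x b ->
  derivable_pt_lim (fun t => f t + g t) x (a + b).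
Proof. intros; apply (derivable_pt_lim_plus f g); auto. Qed.
Lemma dext f x a b : a = b -> derivable_pt_lim f x a -> derivable_pt_lim f x b.
Proof. intros ->; auto. Qed.
Lemma dconst c x : derivable_pt_lim (fun _ => c) x 0.
Proof. apply derivable_pt_lim_const. Qed.
Lemma did x : derivable_pt_lim (fun t => t) x 1.
Proof. apply derivable_pt_lim_id. Qed.

Lemma c2_to_2d f : continuous2 f -> forall x y, continuity_2d_pt f x y.
Proof.
  intros Hf x y eps. destruct (Hf x y eps (cond_pos eps)) as [d [Hd H]].
  assert (Hd2 : 0 < d/2) by lra.
  exists (mkposreal _ Hd2). simpl. intros u v Hu Hv. apply H.
  apply Rabs_def2 in Hu. apply Rabs_def2 in Hv. nra.
Qed.

Lemma c2d_to_2 f : (forall x y, continuity_2d_pt f x y) -> continuous2 f.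
Proof.
  intros Hf x y eps He. destruct (Hf x y (mkposreal _ He)) as [d H].
  destruct d as [d Hd]. exists d. split. exact Hd. intros u v Huv. assert (Huv' : (u-x)*(u-x) + (v-y)*(v-y) < d*d) by (simpl in Huv; lra). apply H; simpl.
  - apply Rabs_def1.
    + destruct (Rlt_or_le (u-x) d); auto. exfalso. clear H Huv. assert (0 <= (v-y)*(v-y)) by apply Rle_0_sqr. assert (0 <= (u-x)*(u-x)) by apply Rle_0_sqr. nra.
    + destruct (Rlt_or_le (-d) (u-x)); auto. exfalso. clear H Huv. assert (0 <= (v-y)*(v-y)) by apply Rle_0_sqr. assert (0 <= (u-x)*(u-x)) by apply Rle_0_sqr. nra.
  - apply Rabs_def1.
    + destruct (Rlt_or_le (v-y) d); auto. exfalso. clear H Huv. assert (0 <= (v-y)*(v-y)) by apply Rle_0_sqr. assert (0 <= (u-x)*(u-x)) by apply Rle_0_sqr. nra.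
    + destruct (Rlt_or_le (-d) (v-y)); auto. exfalso. clear H Huv. assert (0 <= (v-y)*(v-y)) by apply Rle_0_sqr. assert (0 <= (u-x)*(u-x)) by apply Rle_0_sqr. nra.
Qed.

Lemma c2d_slice_y f x y : continuity_2d_pt f x y -> continuous (fun t => f x t) y.
Proof.
  intros H. apply filterlim_locally. intros eps. destruct (H eps) as [d Hd].
  exists d. intros t Ht. apply Hd. rewrite Rminus_eq_0, Rabs_R0. apply cond_pos. exact Ht.
Qed.
Lemma c2d_slice_x f x y : continuity_2d_pt f x y -> continuous (fun t => f t y) x.
Proof.
  intros H. apply filterlim_locally. intros eps. destruct (H eps) as [d Hd].
  exists d. intros t Ht. apply Hd. exact Ht. rewrite Rminus_eq_0, Rabs_R0. apply cond_pos.
Qed.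

Inductive PC : (R -> R -> R) -> Prop :=
| PC_base f : Cinf2 f -> PC f
| PC_const c : PC (fun _ _ => c)
| PC_X : PC (fun x _ => x)
| PC_Y : PC (fun _ y => y)
| PC_add f g : PC f -> PC g -> PC (fun x y => f x y + g x y)
| PC_mul f g : PC f -> PC g -> PC (fun x y => f x y * g x y)
| PC_ext f g : PC f -> (forall x y, f x y = g x y) -> PC g.

Lemma PC_props f : PC f ->
  (forall x y, continuity_2d_pt f x y) /\
  (exists fx, (forall x y, derivable_pt_lim (fun t => f t y) x (fx x y)) /\ PC fx) /\
  (exists fy, (forall x y, derivable_pt_lim (fun t => f x t) y (fy x y)) /\ PC fy).
Proof.
  induction 1.
  - destruct H as [Hc [fx [Hx Cx]] [fy [Hy Cy]]]. split; [apply c2_to_2d; auto|].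
    split; [exists fx|exists fy]; split; auto; constructor; auto.
  - split; [intros; apply continuity_2d_pt_const|].
    split; [exists (fun _ _ => 0)|exists (fun _ _ => 0)]; split; try apply PC_const;
    intros; apply dconst.
  - split; [intros; apply continuity_2d_pt_id1|].
    split; [exists (fun _ _ => 1)|exists (fun _ _ => 0)]; split; try apply PC_const;
    intros; [apply did|apply dconst].
  - split; [intros; apply continuity_2d_pt_id2|].
    split; [exists (fun _ _ => 0)|exists (fun _ _ => 1)]; split; try apply PC_const;
    intros; [apply dconst|apply did].
  - destruct IHPC1 as [c1 [[f1 [d1 p1]] [g1 [e1 q1]]]].
    destruct IHPC2 as [c2 [[f2 [d2 p2]] [g2 [e2 q2]]]].
    split; [intros; apply continuity_2d_pt_plus; auto|].
    split; [exists (fun x y => f1 x y + f2 x y)|exists (fun x y => g1 x y + g2 x y)];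
      split; try (apply PC_add; auto); intros; apply dplus; auto.
  - destruct IHPC1 as [c1 [[f1 [d1 p1]] [g1 [e1 q1]]]].
    destruct IHPC2 as [c2 [[f2 [d2 p2]] [g2 [e2 q2]]]].
    split; [intros; apply continuity_2d_pt_mult; auto|].
    split; [exists (fun x y => f1 x y * g x y + f x y * f2 x y)|
            exists (fun x y => g1 x y * g x y + f x y * g2 x y)];
      (split; [intros|apply PC_add; apply PC_mul; auto]).
    + apply (dmul (fun t => f t y) (fun t => g t y)); auto.
    + apply (dmul (fun t => f x t) (fun t => g x t)); auto.
  - match goal with IH : _ /\ _ |- _ => destruct IH as [c1 [[f1 [d1 p1]] [g1 [e1 q1]]]] end.
    assert (E : f = g) by (do 2 (apply functional_extensionality; intro); auto).
    subst. split; auto. split; eauto.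
Qed.

Lemma PC_Cinf2 : forall f, PC f -> Cinf2 f.
Proof.
  cofix CIH. intros f H.
  destruct (PC_props f H) as [c [[fx [dx px]] [fy [dy py]]]].
  constructor.
  - apply c2d_to_2; auto.
  - exists fx; split; auto.
  - exists fy; split; auto.
Qed.

Lemma Cinf2_PC f : Cinf2 f <-> PC f.
Proof. split; [apply PC_base|apply PC_Cinf2]. Qed.

Lemma Cinf2_ext f g : Cinf2 f -> (forall x y, f x y = g x y) -> Cinf2 g.
Proof. intros; apply PC_Cinf2; eapply PC_ext; [apply PC_base|]; eauto. Qed.

Lemma Cinf2_cont f : Cinf2 f -> forall x y, continuity_2d_pt f x y.
Proof. intros [H _ _]; apply c2_to_2d; auto. Qed.

Lemma Cinf2_dx f g : Cinf2 f -> (forall x y, derivable_pt_lim (fun t => f t y) x (g x y)) -> Cinf2 g.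
Proof.
  intros [_ [fx [Hx Cx]] _] Hg. apply (Cinf2_ext fx); auto.
  intros; eapply uniqueness_limite; eauto.
Qed.
Lemma Cinf2_dy f g : Cinf2 f -> (forall x y, derivable_pt_lim (fun t => f x t) y (g x y)) -> Cinf2 g.
Proof.
  intros [_ _ [fy [Hy Cy]]] Hg. apply (Cinf2_ext fy); auto.
  intros; eapply uniqueness_limite; eauto.
Qed.

Lemma Rint_RInt g a b : ex_RInt g a b -> Rint g a b = RInt g a b.
Proof.
  intros H. unfold Rint. destruct excluded_middle_informative as [e|n].
  - symmetry; apply RInt_Reals.
  - exfalso. apply n. exists (ex_RInt_Reals_0 _ _ _ H). exact I.
Qed.

Lemma inner_ex f x a b : Cinf2 f -> ex_RInt (fun y => f x y) a b.
Proof.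
  intros H. apply (@ex_RInt_continuous R_CompleteNormedModule). intros z _. apply c2d_slice_y. apply Cinf2_cont; auto.
Qed.

Lemma param_deriv f fx a b : Cinf2 f ->
  (forall x y, derivable_pt_lim (fun t => f t y) x (fx x y)) ->
  forall x, is_derive (fun x => RInt (fun y => f x y) a b) x (RInt (fun y => fx x y) a b).
Proof.
  intros Hf Hd x.
  assert (Cx : Cinf2 fx) by (eapply Cinf2_dx; eauto).
  assert (E : (fun u v => Derive (fun z => f z v) u) = fx).
  { do 2 (apply functional_extensionality; intro). apply is_derive_unique.
    apply is_derive_Reals. auto. }
  assert (E2 : (fun t => Derive (fun u => f u t) x) = (fun t => fx x t)).
  { apply functional_extensionality; intro t.
    exact (f_equal (fun F => F x t) E). }
  rewrite <- E2.
  apply (is_derive_RInt_param f a b x).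
  - apply filter_forall. intros y t _. exists (fx y t). apply is_derive_Reals. auto.
  - intros t _. rewrite E. apply Cinf2_cont; auto.
  - apply filter_forall. intros y. apply inner_ex; auto.
Qed.

Lemma param_cont f a b : Cinf2 f -> forall x, continuous (fun x => RInt (fun y => f x y) a b) x.
Proof.
  intros Hf x. pose proof Hf as Hf0. destruct Hf0 as [c [fx [Hx Cx]] Hy].
  apply (@ex_derive_continuous R_AbsRing R_NormedModule). exists (RInt (fun y => fx x y) a b).
  apply param_deriv; auto.
Qed.

Lemma outer_ex f a b c d : Cinf2 f -> ex_RInt (fun x => RInt (fun y => f x y) c d) a b.
Proof.
  intros H. apply (@ex_RInt_continuous R_CompleteNormedModule). intros z _. apply param_cont; auto.
Qed.

Lemma Int_box_RInt f R0 : Cinf2 f ->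
  Int_box f R0 = RInt (fun x => RInt (fun y => f x y) (-R0) R0) (-R0) R0.
Proof.
  intros H. unfold Int_box.
  assert (E : (fun x => Rint (fun y => f x y) (-R0) R0) = (fun x => RInt (fun y => f x y) (-R0) R0)).
  { apply functional_extensionality; intro x. apply Rint_RInt, inner_ex; auto. }
  rewrite E. apply Rint_RInt, outer_ex; auto.
Qed.

Lemma Int_box_plus f g R0 : Cinf2 f -> Cinf2 g ->
  Int_box (fun x y => f x y + g x y) R0 = Int_box f R0 + Int_box g R0.
Proof.
  intros Hf Hg.
  assert (Hfg : Cinf2 (fun x y => f x y + g x y)) by (apply PC_Cinf2, PC_add; apply PC_base; auto).
  rewrite !Int_box_RInt; auto.
  assert (E : (fun x => RInt (fun y => f x y + g x y) (-R0) R0) =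
              (fun x => RInt (fun y => f x y) (-R0) R0 + RInt (fun y => g x y) (-R0) R0)).
  { apply functional_extensionality; intro x.
    exact (RInt_plus (fun y => f x y) (fun y => g x y) _ _ (inner_ex f x _ _ Hf) (inner_ex g x _ _ Hg)). }
  rewrite E.
  exact (RInt_plus _ _ _ _ (outer_ex f _ _ _ _ Hf) (outer_ex g _ _ _ _ Hg)).
Qed.

Lemma Int_box_scal f k R0 : Cinf2 f ->
  Int_box (fun x y => k * f x y) R0 = k * Int_box f R0.
Proof.
  intros Hf.
  assert (Hfg : Cinf2 (fun x y => k * f x y)) by (apply PC_Cinf2, PC_mul; [apply PC_const|apply PC_base; auto]).
  rewrite !Int_box_RInt; auto.
  assert (E : (fun x => RInt (fun y => k * f x y) (-R0) R0) =
              (fun x => k * RInt (fun y => f x y) (-R0) R0)).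
  { apply functional_extensionality; intro x.
    exact (RInt_scal (fun y => f x y) _ _ k (inner_ex f x _ _ Hf)). }
  rewrite E.
  exact (RInt_scal _ _ _ k (outer_ex f _ _ _ _ Hf)).
Qed.

Lemma Int_box_le f g R0 : 0 < R0 -> Cinf2 f -> Cinf2 g ->
  (forall x y, f x y <= g x y) -> Int_box f R0 <= Int_box g R0.
Proof.
  intros HR Hf Hg Hle. rewrite !Int_box_RInt; auto.
  apply RInt_le; try lra; try (apply outer_ex; auto).
  intros x _. apply RInt_le; try lra; try (apply inner_ex; auto).
  intros y _; apply Hle.
Qed.

Lemma Int_box_zero R0 : Int_box (fun _ _ => 0) R0 = 0.
Proof.
  rewrite Int_box_RInt by (apply PC_Cinf2, PC_const).
  rewrite RInt_const. rewrite RInt_const. unfold scal; simpl; unfold mult; simpl. ring.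
Qed.

Lemma RInt_zero_fun (h : R -> R) a b : (forall y, h y = 0) -> RInt h a b = 0.
Proof.
  intros H. assert (E : h = fun _ => 0) by (apply functional_extensionality; auto).
  rewrite E, RInt_const. unfold scal; simpl; unfold mult; simpl. ring.
Qed.

Lemma Int_box_dy_zero G Gy R0 : Cinf2 G ->
  (forall x y, derivable_pt_lim (fun t => G x t) y (Gy x y)) ->
  (forall x, G x R0 = 0 /\ G x (-R0) = 0) -> Int_box Gy R0 = 0.
Proof.
  intros HG Hd Hb. assert (Cy : Cinf2 Gy) by (eapply Cinf2_dy; eauto).
  rewrite Int_box_RInt; auto. apply RInt_zero_fun. intros x.
  rewrite (is_RInt_unique (fun y => Gy x y) (-R0) R0 (G x R0 - G x (-R0))).
  - destruct (Hb x) as [-> ->]. ring.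
  - apply (is_RInt_derive (fun y => G x y) (fun y => Gy x y)).
    + intros y _. apply is_derive_Reals; auto.
    + intros y _. apply c2d_slice_y, Cinf2_cont; auto.
Qed.

Lemma Int_box_dx_zero G Gx R0 : Cinf2 G ->
  (forall x y, derivable_pt_lim (fun t => G t y) x (Gx x y)) ->
  (forall y, G R0 y = 0 /\ G (-R0) y = 0) -> Int_box Gx R0 = 0.
Proof.
  intros HG Hd Hb. assert (Cx : Cinf2 Gx) by (eapply Cinf2_dx; eauto).
  rewrite Int_box_RInt; auto.
  rewrite (is_RInt_unique (fun x => RInt (fun y => Gx x y) (-R0) R0) (-R0) R0
     (RInt (fun y => G R0 y) (-R0) R0 - RInt (fun y => G (-R0) y) (-R0) R0)).
  - rewrite !RInt_zero_fun; [ring| |]; intros y; apply Hb.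
  - apply (is_RInt_derive (fun x => RInt (fun y => G x y) (-R0) R0)
                          (fun x => RInt (fun y => Gx x y) (-R0) R0)).
    + intros x _. apply param_deriv; auto.
    + intros x _. apply param_cont; auto.
Qed.

Lemma schwarz_gen f fx fy fxy fyx : Cinf2 f ->
  (forall x y, derivable_pt_lim (fun t => f t y) x (fx x y)) ->
  (forall x y, derivable_pt_lim (fun t => f x t) y (fy x y)) ->
  (forall x y, derivable_pt_lim (fun t => fx x t) y (fxy x y)) ->
  (forall x y, derivable_pt_lim (fun t => fy t y) x (fyx x y)) ->
  forall x y, fxy x y = fyx x y.
Proof.
  intros Hf Hx Hy Hxy Hyx x y.
  pose proof (Cinf2_dx f fx Hf Hx) as Cx.
  pose proof (Cinf2_dy f fy Hf Hy) as Cy.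
  pose proof (Cinf2_dy fx fxy Cx Hxy) as Cxy.
  pose proof (Cinf2_dx fy fyx Cy Hyx) as Cyx.
  assert (E1 : forall z v, Derive (fun t => f z t) v = fy z v)
    by (intros; apply is_derive_unique, is_derive_Reals; auto).
  assert (E2 : forall u z, Derive (fun t => f t z) u = fx u z)
    by (intros; apply is_derive_unique, is_derive_Reals; auto).
  assert (A1 : Derive (fun z => Derive (fun t => f z t) y) x = fyx x y).
  { rewrite (Derive_ext (fun z => Derive (fun t => f z t) y) (fun z => fy z y)) by auto.
    apply is_derive_unique, is_derive_Reals; auto. }
  assert (A2 : Derive (fun z => Derive (fun t => f t z) x) y = fxy x y).
  { rewrite (Derive_ext (fun z => Derive (fun t => f t z) x) (fun z => fx x z)) by auto.
    apply is_derive_unique, is_derive_Reals; auto. }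
  rewrite <- A1, <- A2.
  symmetry; apply Schwarz.
  - apply locally_2d_forall. intros u v. repeat split.
    + exists (fx u v). apply is_derive_Reals; auto.
    + exists (fy u v). apply is_derive_Reals; auto.
    + apply (ex_derive_ext (fun z => fy z v)). intros; symmetry; auto.
      exists (fyx u v). apply is_derive_Reals; auto.
    + apply (ex_derive_ext (fun z => fx u z)). intros; symmetry; auto.
      exists (fxy u v). apply is_derive_Reals; auto.
  - apply (continuity_2d_pt_ext fyx).
    + intros u v. rewrite (Derive_ext _ (fun z => fy z v)) by auto. symmetry.
      apply is_derive_unique, is_derive_Reals; auto.
    + apply Cinf2_cont; auto.
  - apply (continuity_2d_pt_ext fxy).
    + intros u v. rewrite (Derive_ext _ (fun z => fx u z)) by auto. symmetry.
      apply is_derive_unique, is_derive_Reals; auto.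
    + apply Cinf2_cont; auto.
Qed.

Lemma zero_near_deriv (g : R -> R) x d : 0 < d -> (forall t, Rabs (t - x) < d -> g t = 0) ->
  derivable_pt_lim g x 0.
Proof.
  intros Hd Hg eps He. exists (mkposreal d Hd). intros h Hh Hlt. simpl in Hlt.
  rewrite (Hg (x+h)), (Hg x).
  - replace ((0 - 0) / h - 0) with 0 by (unfold Rdiv; ring). rewrite Rabs_R0. exact He.
  - rewrite Rminus_eq_0, Rabs_R0. exact Hd.
  - replace (x + h - x) with h by ring. exact Hlt.
Qed.

Lemma ux_vanish u ux R0 : 0 < R0 -> supported_in_box u R0 -> Cinf2 ux ->
  (forall x y, derivable_pt_lim (fun t => u t y) x (ux x y)) ->
  forall x y, R0 <= Rabs x \/ R0 <= Rabs y -> ux x y = 0.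
Proof.
  intros HR Hs Hc Hd.
  assert (Strict : forall x y, R0 < Rabs x \/ R0 < Rabs y -> ux x y = 0).
  { intros x y [Hx|Hy].
    - eapply uniqueness_limite; [apply Hd|].
      apply (zero_near_deriv _ x (Rabs x - R0)); [lra|].
      intros t Ht. apply Hs. left.
      pose proof (Rabs_triang_inv x (x - t)).
      replace (x - (x - t)) with t in H by ring.
      rewrite Rabs_minus_sym in Ht. lra.
    - eapply uniqueness_limite; [apply Hd|].
      apply (zero_near_deriv _ x 1); [lra|].
      intros t _. apply Hs. right. exact Hy. }
  intros x y Hxy.
  destruct (Req_dec (ux x y) 0) as [|Hn]; auto. exfalso.
  pose proof (Cinf2_cont ux Hc x y) as Hcont.
  assert (He : 0 < Rabs (ux x y)) by (apply Rabs_pos_lt; auto).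
  destruct (Hcont (mkposreal _ He)) as [d Hdd]. simpl in Hdd.
  set (M := Rabs x + Rabs y + 1).
  assert (HM : 0 < M) by (unfold M; pose proof (Rabs_pos x); pose proof (Rabs_pos y); lra).
  set (h := d / (2 * M)).
  assert (Hh : 0 < h) by (unfold h; apply Rdiv_lt_0_compat; [apply cond_pos|lra]).
  assert (HhM : h * M < d).
  { unfold h. field_simplify; [|lra]. pose proof (cond_pos d). lra. }
  assert (Z : ux ((1+h)*x) ((1+h)*y) = 0).
  { apply Strict. rewrite !Rabs_mult, (Rabs_pos_eq (1+h)) by lra.
    destruct Hxy as [Hx|Hy]; [left|right]; pose proof (Rabs_pos x); pose proof (Rabs_pos y); nra. }
  assert (Hb : Rabs (ux ((1+h)*x) ((1+h)*y) - ux x y) < Rabs (ux x y)).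
  { apply Hdd.
    - replace ((1+h)*x - x) with (h*x) by ring. rewrite Rabs_mult, Rabs_pos_eq by lra.
      unfold M in HhM. pose proof (Rabs_pos x); pose proof (Rabs_pos y); nra.
    - replace ((1+h)*y - y) with (h*y) by ring. rewrite Rabs_mult, Rabs_pos_eq by lra.
      unfold M in HhM. pose proof (Rabs_pos x); pose proof (Rabs_pos y); nra. }
  rewrite Z, Rminus_0_l, Rabs_Ropp in Hb. lra.
Qed.

Lemma PC_pow f n : PC f -> PC (fun x y => f x y ^ n).
Proof.
  intros H. induction n.
  - eapply PC_ext; [apply (PC_const 1)|]. intros; simpl; auto.
  - eapply PC_ext; [apply (PC_mul _ _ H IHn)|]. intros; simpl; auto.
Qed.

Ltac pc := repeat first [ apply PC_add | apply PC_mul | apply PC_pow | apply PC_const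
                        | apply PC_X | apply PC_Y | (apply PC_base; assumption) ].

Lemma dwx p x y : derivable_pt_lim (fun t => (t^2+y^2)^p) x (INR p * (x^2+y^2)^(p-1) * (2*x)).
Proof.
  replace (p-1)%nat with (Nat.pred p) by lia.
  change (fun t => (t^2+y^2)^p) with (comp (fun z => z^p) (fun t => t^2+y^2)).
  eapply dext; [|apply derivable_pt_lim_comp].
  2: { apply dplus; [apply derivable_pt_lim_pow|apply dconst]. }
  2: apply derivable_pt_lim_pow.
  simpl. ring.
Qed.

Lemma dwy p x y : derivable_pt_lim (fun t => (x^2+t^2)^p) y (INR p * (x^2+y^2)^(p-1) * (2*y)).
Proof.
  replace (p-1)%nat with (Nat.pred p) by lia.
  change (fun t => (x^2+t^2)^p) with (comp (fun z => z^p) (fun t => x^2+t^2)).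
  eapply dext; [|apply derivable_pt_lim_comp].
  2: { apply dplus; [apply dconst|apply derivable_pt_lim_pow]. }
  2: apply derivable_pt_lim_pow.
  simpl. ring.
Qed.

Lemma amgm p a b s t r : (p = 1 \/ p = 2)%nat -> r = a^2 + b^2 ->
  2 * (INR p * r^(p-1) * (2*a)) * s * t <= 1/4 * r^p * t^2 + 64 * r^(p-1) * s^2.
Proof.
  intros [-> | ->] ->; simpl.
  - pose proof (Rle_0_sqr (a*t - 8*s)). pose proof (Rle_0_sqr (b*t)). unfold Rsqr in *. nra.
  - pose proof (Rle_0_sqr (a*t - 16*s)). pose proof (Rle_0_sqr (b*t)).
    pose proof (Rle_0_sqr a). pose proof (Rle_0_sqr b). unfold Rsqr in *.
    assert (0 <= (a*a+b*b) * ((a*t - 16*s)*(a*t - 16*s))) by (apply Rmult_le_pos; lra).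
    assert (0 <= (a*a+b*b) * ((b*t)*(b*t))) by (apply Rmult_le_pos; lra).
    nra.
Qed.

Lemma dext2 f x a b : derivable_pt_lim f x a -> a = b -> derivable_pt_lim f x b.
Proof. intros H <-; auto. Qed.

Theorem lemmaA1 :
  forall p : nat, (p = 1 \/ p = 2)%nat ->
  exists C : R, 0 < C /\
  forall (u ux uy uxx uxy uyx uyy : R -> R -> R),
    Cinf2 u -> compact_support u ->
    (forall x y, derivable_pt_lim (fun t => u t y) x (ux x y)) ->
    (forall x y, derivable_pt_lim (fun t => u x t) y (uy x y)) ->
    (forall x y, derivable_pt_lim (fun t => ux t y) x (uxx x y)) ->
    (forall x y, derivable_pt_lim (fun t => ux x t) y (uxy x y)) ->
    (forall x y, derivable_pt_lim (fun t => uy t y) x (uyx x y)) ->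
    (forall x y, derivable_pt_lim (fun t => uy x t) y (uyy x y)) ->
    forall R0 : R, 0 < R0 -> supported_in_box u R0 ->
      Int_box (fun x y => (x^2 + y^2)^p *
                 (uxx x y ^ 2 + uxy x y ^ 2 + uyx x y ^ 2 + uyy x y ^ 2)) R0
      <= C * (Int_box (fun x y => (x^2 + y^2)^p * (uxx x y + uyy x y) ^ 2) R0
              + Int_box (fun x y => (x^2 + y^2)^(p - 1) * (ux x y ^ 2 + uy x y ^ 2)) R0).
Proof.
  intros p Hp. exists 200. split; [lra|].
  intros u ux uy uxx uxy uyx uyy Hu _ Hux Huy Huxx Huxy Huyx Huyy R0 HR0 Hs.
  pose proof (Cinf2_dx u ux Hu Hux) as Cux.
  pose proof (Cinf2_dy u uy Hu Huy) as Cuy.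
  pose proof (Cinf2_dx ux uxx Cux Huxx) as Cuxx.
  pose proof (Cinf2_dy ux uxy Cux Huxy) as Cuxy.
  pose proof (Cinf2_dx uy uyx Cuy Huyx) as Cuyx.
  pose proof (Cinf2_dy uy uyy Cuy Huyy) as Cuyy.
  pose proof Cuyy as [_ [uyyx [Huyyx Cuyyx]] _].
  pose proof Cuyx as [_ _ [uyxy [Huyxy Cuyxy]]].
  pose proof (schwarz_gen u ux uy uxy uyx Hu Hux Huy Huxy Huyx) as Hb.
  pose proof (schwarz_gen uy uyx uyy uyxy uyyx Cuy Huyx Huyy Huyxy Huyyx) as Hc.
  pose proof (ux_vanish u ux R0 HR0 Hs Cux Hux) as Hv.
  set (Q := fun x y => INR p * (x^2+y^2)^(p-1) * (2*x) * ux x y * uyy x y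
                     + (x^2+y^2)^p * uxx x y * uyy x y + (x^2+y^2)^p * ux x y * uyyx x y).
  set (P := fun x y => INR p * (x^2+y^2)^(p-1) * (2*y) * ux x y * uyx x y
                     + (x^2+y^2)^p * uxy x y * uyx x y + (x^2+y^2)^p * ux x y * uyxy x y).
  assert (IQ : Int_box Q R0 = 0).
  { apply (Int_box_dx_zero (fun x y => (x^2+y^2)^p * ux x y * uyy x y)).
    - apply PC_Cinf2; pc.
    - intros x y. unfold Q.
      eapply dext2; [apply (dmul (fun t => (t^2+y^2)^p * ux t y) (fun t => uyy t y)); [apply (dmul (fun t => (t^2+y^2)^p) (fun t => ux t y))|]|].
      + apply dwx.
      + auto.
      + auto.
      + ring.
    - intros y. rewrite !Hv; [split; ring| |]; left;
        rewrite ?Rabs_Ropp, Rabs_pos_eq; lra. }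
  assert (IP : Int_box P R0 = 0).
  { apply (Int_box_dy_zero (fun x y => (x^2+y^2)^p * ux x y * uyx x y)).
    - apply PC_Cinf2; pc.
    - intros x y. unfold P.
      eapply dext2; [apply (dmul (fun t => (x^2+t^2)^p * ux x t) (fun t => uyx x t)); [apply (dmul (fun t => (x^2+t^2)^p) (fun t => ux x t))|]|].
      + apply dwy.
      + auto.
      + auto.
      + ring.
    - intros x. rewrite !Hv; [split; ring| |]; right;
        rewrite ?Rabs_Ropp, Rabs_pos_eq; lra. }
  set (I1 := fun x y => (x^2 + y^2)^p * (uxx x y ^ 2 + uxy x y ^ 2 + uyx x y ^ 2 + uyy x y ^ 2)).
  set (I2 := fun x y => (x^2 + y^2)^p * (uxx x y + uyy x y) ^ 2).
  set (I3 := fun x y => (x^2 + y^2)^(p - 1) * (ux x y ^ 2 + uy x y ^ 2)).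
  assert (C1 : Cinf2 I1) by (apply PC_Cinf2; unfold I1; pc).
  assert (C2 : Cinf2 I2) by (apply PC_Cinf2; unfold I2; pc).
  assert (C3 : Cinf2 I3) by (apply PC_Cinf2; unfold I3; pc).
  assert (CP : Cinf2 P) by (apply PC_Cinf2; unfold P; pc).
  assert (CQ : Cinf2 Q) by (apply PC_Cinf2; unfold Q; pc).
  assert (Key : Int_box (fun x y => 3/4 * I1 x y) R0 <=
                Int_box (fun x y => I2 x y + (128 * I3 x y + (2 * P x y + (-2) * Q x y))) R0).
  { apply Int_box_le; [lra| apply PC_Cinf2; pc | apply PC_Cinf2; pc |].
    intros x y. unfold I1, I2, I3, P, Q. rewrite Hb, Hc.
    pose proof (amgm p x y (ux x y) (uyy x y) (x^2+y^2) Hp eq_refl) as H1.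
    pose proof (amgm p y x (-(ux x y)) (uyx x y) (x^2+y^2) Hp ltac:(ring)) as H2.
    assert (HW : 0 <= (x^2+y^2)^p) by (apply pow_le; nra).
    assert (HV : 0 <= (x^2+y^2)^(p-1)) by (apply pow_le; nra).
    set (W := (x^2+y^2)^p) in *. set (V := (x^2+y^2)^(p-1)) in *.
    assert (0 <= W * uxx x y ^ 2) by (apply Rmult_le_pos; [lra|apply pow2_ge_0]).
    assert (0 <= W * uyx x y ^ 2) by (apply Rmult_le_pos; [lra|apply pow2_ge_0]).
    assert (0 <= V * uy x y ^ 2) by (apply Rmult_le_pos; [lra|apply pow2_ge_0]).
    nra. }
  rewrite (Int_box_scal I1 (3/4)) in Key by auto.
  rewrite (Int_box_plus I2) in Key by (auto; apply PC_Cinf2; pc).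
  rewrite (Int_box_plus (fun x y => 128 * I3 x y)) in Key by (apply PC_Cinf2; pc).
  rewrite (Int_box_scal I3 128) in Key by auto.
  rewrite (Int_box_plus (fun x y => 2 * P x y)) in Key by (apply PC_Cinf2; pc).
  rewrite (Int_box_scal P 2), (Int_box_scal Q (-2)), IP, IQ in Key by auto.
  assert (N2 : 0 <= Int_box I2 R0).
  { rewrite <- (Int_box_zero R0). apply Int_box_le; auto. apply PC_Cinf2, PC_const.
    intros x y; unfold I2; apply Rmult_le_pos; [apply pow_le; nra|apply pow2_ge_0]. }
  assert (N3 : 0 <= Int_box I3 R0).
  { rewrite <- (Int_box_zero R0). apply Int_box_le; auto. apply PC_Cinf2, PC_const.
    intros x y; unfold I3; apply Rmult_le_pos; [apply pow_le; nra|].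
    pose proof (pow2_ge_0 (ux x y)); pose proof (pow2_ge_0 (uy x y)); lra. }
  lra.
Qed.
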